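(* Let $M$ be a real $N\times N$ matrix all of whose column sums $\sum_{i}M_{i,j}$ are equal, and let $\Gamma(M)=\max_j\sum_{i=1}^N|M_{i,j}|$. Then every decomposition $M=\sum_a c_a S_a$ with finitely many stochastic matrices $S_a$ and real coefficients $c_a$ satisfies $\sum_a|c_a|\ge\Gamma(M)$, and there exists such a decomposition with $\sum_a|c_a|=\Gamma(M)$.
   Context: A stochastic matrix is a real square matrix with nonnegative entries whose columns each sum to $1$. *)

(* Defs.v *)
From mathcomp Require Import all_boot all_order all_algebra.
From mathcomp Require Import reals.
Set Implicit Arguments. Unset Strict Implicit. Unset Printing Implicit Defensive.
Import Order.TTheory GRing.Theory Num.Theory.
Local Open Scope ring_scope.

Definition stochastic (R : realType) (N : nat) (S : 'M[R]_N) : Prop :=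
  (forall i j, 0 <= S i j) /\ (forall j, \sum_(i < N) S i j = 1).

Definition equal_col_sums (R : realType) (N : nat) (M : 'M[R]_N) : Prop :=
  forall j j' : 'I_N, \sum_(i < N) M i j = \sum_(i < N) M i j'.

Definition Gamma (R : realType) (N : nat) (M : 'M[R]_N) : R :=
  \big[Num.max/0]_(j < N) \sum_(i < N) `|M i j|.

(* Main.v *)
Require Import Defs.
From mathcomp Require Import all_boot all_order all_algebra.
From mathcomp Require Import reals.
From mathcomp Require Import ring lra.
Import Order.TTheory GRing.Theory Num.Theory.
Local Open Scope ring_scope.

Lemma posneg (R : realType) (x : R) :
  x = Num.max x 0 - Num.max (-x) 0 /\ `|x| = Num.max x 0 + Num.max (-x) 0.
Proof.
have hn : `|x| = if 0 <= x then x else - x.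
  by case: (lerP 0 x) => hx; [rewrite ger0_norm | rewrite ltr0_norm].
rewrite hn; unfold Num.max, Order.max.
case: (lerP 0 x) => hx; case: (ltrP x 0) => h1; case: (ltrP (-x) 0) => h2; split; lra.
Qed.

Lemma max0_ge0 (R : realType) (x : R) : 0 <= Num.max x 0.
Proof. unfold Num.max, Order.max; case: (ltrP x 0) => h; lra. Qed.

Lemma stoch_of (R : realType) (n : nat) (a : 'M[R]_n.+1) (al : R) :
  (forall i j, 0 <= a i j) -> (forall j, \sum_i a i j = al) ->
  exists A, stochastic A /\ a = al *: A.
Proof.
move=> hpos hsum.
have al0 : 0 <= al by rewrite -(hsum ord0) sumr_ge0.
case: (eqVneq al 0) => [eal|alnz].
- exists (\matrix_(i, j) (i == ord0)%:R); split; last first.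
    apply/matrixP => i j; rewrite eal !mxE mul0r.
    apply: (@psumr_eq0P _ _ xpredT (fun k => a k j)).
    - by move=> k _; exact: hpos.
    - by rewrite hsum eal.
    - by [].
  split=> [i j|j]; first by rewrite mxE ler0n.
  rewrite (bigD1 ord0) //= big1 ?mxE ?eqxx ?addr0 // => i /negPf ni.
  by rewrite mxE ni.
- exists (al^-1 *: a); split; last by rewrite scalerA divff // scale1r.
  split=> [i j|j]; first by rewrite mxE mulr_ge0 // invr_ge0.
  under eq_bigr do rewrite mxE.
  by rewrite -mulr_sumr hsum mulVf.
Qed.

Lemma le_bigmaxR (R : realType) (m : nat) (F : 'I_m -> R) (j : 'I_m) :
  F j <= \big[Num.max/0]_(i < m) F i.
Proof.
rewrite unlock /=.
have : j \in index_enum 'I_m by rewrite mem_index_enum.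
elim: (index_enum _) => [//|x r IH] /=.
rewrite inE => /orP [/eqP <-|/IH h]; unfold Num.max, Order.max in *.
- set t := reducebig _ _ _. case: (ltrP (F j) t) => h1; lra.
- set t := reducebig _ _ _ in h *. case: (ltrP (F x) t) => h1; lra.
Qed.
Lemma bigmax_leR (R : realType) (m : nat) (F : 'I_m -> R) (x : R) :
  0 <= x -> (forall i, F i <= x) -> \big[Num.max/0]_(i < m) F i <= x.
Proof.
move=> h0 hF; rewrite unlock /=.
elim: (index_enum _) => [//|y r IH] /=.
unfold Num.max, Order.max in *.
set t := reducebig _ _ _ in IH *. have := hF y. case: (ltrP (F y) t) => h1; lra.
Qed.

Theorem mainTheorem4 (R : realType) (N : nat) (M : 'M[R]_N) :
  equal_col_sums M ->
  (forall (k : nat) (c : 'I_k -> R) (S : 'I_k -> 'M[R]_N),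
      (forall a, stochastic (S a)) ->
      M = \sum_(a < k) c a *: S a ->
      Gamma M <= \sum_(a < k) `|c a|)
  /\
  (exists (k : nat) (c : 'I_k -> R) (S : 'I_k -> 'M[R]_N),
      (forall a, stochastic (S a)) /\
      M = \sum_(a < k) c a *: S a /\
      \sum_(a < k) `|c a| = Gamma M).
Proof.
move=> heq; split.
  move=> k c S hS ->; apply: bigmax_leR; first by apply: sumr_ge0 => a _.
  move=> j.
  apply: (le_trans (y := \sum_i \sum_(a < k) `|c a| * S a i j)).
    apply: ler_sum => i _; rewrite summxE.
    apply: (le_trans (ler_norm_sum _ _ _)); apply: ler_sum => a _.
    by rewrite mxE normrM (ger0_norm (proj1 (hS a) i j)).
  rewrite exchange_big /=; apply: ler_sum => a _.
  by rewrite -mulr_sumr (proj2 (hS a) j) mulr1.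
case: N M heq => [|n] M heq.
  exists 0%N, (fun _ => 0), (fun _ => 0); split; first by case.
  split; first by rewrite big_ord0; apply/matrixP => [[]].
  by rewrite big_ord0 /Gamma big_ord0.
set G := Gamma M.
set s := \sum_i M i ord0.
pose p j := \sum_i Num.max (M i j) 0.
pose q j := \sum_i Num.max (- M i j) 0.
have hs j : p j - q j = s.
  rewrite /s (heq ord0 j) /p /q -sumrB; apply: eq_bigr => i _.
  by rewrite -(proj1 (posneg _ (M i j))).
have hg j : p j + q j = \sum_i `|M i j|.
  rewrite /p /q -big_split; apply: eq_bigr => i _.
  by symmetry; exact: (proj2 (posneg _ (M i j))).
have hG j : p j + q j <= G.
  rewrite hg /G /Gamma. exact (@le_bigmaxR R _ (fun j0 => \sum_i `|M i j0|) j).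
have hp j : 0 <= p j by apply: sumr_ge0 => i _; exact: max0_ge0.
have hq j : 0 <= q j by apply: sumr_ge0 => i _; exact: max0_ge0.
pose r j := (G - (p j + q j)) / 2.
have hr j : 0 <= r j by rewrite /r divr_ge0 // subr_ge0.
pose al := (G + s) / 2.
pose be := (G - s) / 2.
pose a := \matrix_(i, j) (Num.max (M i j) 0 + (i == ord0)%:R * r j).
pose b := \matrix_(i, j) (Num.max (- M i j) 0 + (i == ord0)%:R * r j).
have colsum (f : 'I_n.+1 -> 'I_n.+1 -> R) j :
    \sum_i (f i j + (i == ord0)%:R * r j) = \sum_i f i j + r j.
  rewrite big_split /=; congr (_ + _).
  rewrite (bigD1 ord0) //= big1 ?eqxx ?mul1r ?addr0 // => i /negPf ->.
  by rewrite mul0r.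
have [A [hA ea]] : exists A, stochastic A /\ a = al *: A.
  apply: stoch_of.
    move=> i0 j0; rewrite mxE; apply: addr_ge0; [exact: max0_ge0 | apply: mulr_ge0; [exact: ler0n | exact: hr]].
  move=> j0; under eq_bigr do rewrite mxE.
  rewrite (colsum (fun i0 j0 => Num.max (M i0 j0) 0)) -/(p j0) /r /al -(hs j0).
  by field.
have [B [hB eb]] : exists B, stochastic B /\ b = be *: B.
  apply: stoch_of.
    move=> i0 j0; rewrite mxE; apply: addr_ge0; [exact: max0_ge0 | apply: mulr_ge0; [exact: ler0n | exact: hr]].
  move=> j0; under eq_bigr do rewrite mxE.
  rewrite (colsum (fun i0 j0 => Num.max (- M i0 j0) 0)) -/(q j0) /r /be -(hs j0).
  by field.
have hal : 0 <= al.
  rewrite /al -(hs ord0) divr_ge0 //.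
  have := hG ord0; have := hp ord0; have := hq ord0; lra.
have hbe : 0 <= be.
  rewrite /be -(hs ord0) divr_ge0 //.
  have := hG ord0; have := hp ord0; have := hq ord0; lra.
exists 2%N, (fun x => if x == ord0 then al else - be),
  (fun x => if x == ord0 then A else B).
split; first by move=> x; case: ifP.
rewrite !big_ord_recr !big_ord0 /= !add0r.
split.
  apply/matrixP => i j.
  have -> : (- be) *: B = - b by rewrite eb scaleNr.
  rewrite -ea !mxE {1}(proj1 (posneg _ (M i j))); ring.
by rewrite normrN !ger0_norm // /al /be; field.
Qed.
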